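(* Let $X\subset\mathbb{R}^n$ be a compact $n$-dimensional manifold and let $f_0,\ldots,f_{M-1}:X\to X$ be maps satisfying: for each $i\in\{0,\ldots,M-1\}$, (i) $f_i$ is continuously differentiable and almost everywhere a local diffeomorphism; (ii) $f_i$ has finitely many hyperbolic stable fixed points $x_i^0,\ldots,x_i^{L(i)-1}$; (iii) their basins $\mathcal{B}_i^j$ satisfy $\ell\big(X\setminus\bigcup_j\mathcal{B}_i^j\big)=0$; (iv) for all $k\in\{0,\ldots,M-1\}$ and $j\in\{0,\ldots,L(i)-1\}$ there is $P(i,j,k)\in\{0,\ldots,L(k)-1\}$ with $x_i^j\in\mathcal{B}_k^{P(i,j,k)}$. Consider the switching system $x[k+1]=f_{v[k]}(x[k])$ driven by $\mathbf{v}\in\{0,\ldots,M-1\}^{\mathbb{Z}}$. Let $m_{\min}$ and $\mathbf{v}$ be such that ($\mathbf{v}$ has minimum repetitions $m_i^-\geq m_{\min}$ for all $i$ and) for every entire attractor sequence $A$ for $\mathbf{v}$ there is a pullback attracting entire solution $\{\xi_A[k]\}$ with $\xi_A[k]\in\mathcal{B}^{A[k+1]}_{v[k+1]}$ for all $k$. Suppose there are $E$ distinct entire attractor sequences for $\mathbf{v}$. Then the echo index of the system for the input $\mathbf{v}$ is at least $E$.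
   Context: $\ell$ is Lebesgue measure; $\mathcal{B}_i^j$ is the basin of attraction of $x_i^j$ under $f_i$. Minimum repetition $m_i^-$: every maximal block of consecutive $i$'s in $\mathbf{v}$ has length at least $m_i^-$. An entire attractor sequence for $\mathbf{v}$ is $\{A[k]\}_{k\in\mathbb{Z}}$ with $A[k]\in\{0,\ldots,L(v[k])-1\}$ and $A[k]=P(v[k-1],A[k-1],v[k])$ for all $k$. An entire solution is a sequence $\{\xi[k]\}_{k\in\mathbb{Z}}\subset X$ with $\xi[k+1]=f_{v[k]}(\xi[k])$; it is pullback attracting if it attracts some neighbourhood of itself in the pullback sense (images under $f_{v[k-1]}\circ\cdots\circ f_{v[k-n]}$ of an $\epsilon$-ball about $\xi[k-n]$ converge to $\xi[k]$ as $n\to\infty$). The echo index $\mathcal{I}(\mathbf{v})$ is the smallest number $m$ of uniformly attracting entire solutions $\mathbf{x}_1,\ldots,\mathbf{x}_m$ such that the sets of initial states uniformly attracted to them together cover $X$ up to a set of zero Lebesgue measure. *)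

(* Defs.v *)
From HB Require Import structures.
From mathcomp Require Import all_boot all_order all_algebra.
From mathcomp Require Import all_classical all_reals all_analysis.
From mathcomp Require Import complex.
Set Implicit Arguments.
Unset Strict Implicit.
Unset Printing Implicit Defensive.
Import Order.TTheory GRing.Theory Num.Theory.
Import numFieldNormedType.Exports.
Local Open Scope classical_set_scope.
Local Open Scope ring_scope.

Section Defs.
Variables (R : realType) (n : nat).
Local Notation V := 'rV[R]_n.

Definition box (a b : V) : set V :=
  [set x | forall i : 'I_n, a ord0 i <= x ord0 i <= b ord0 i].
Definition box_vol (a b : V) : R :=
  \prod_(i < n) Num.max 0 (b ord0 i - a ord0 i).
Definition lnull (A : set V) : Prop :=
  forall e : R, 0 < e -> exists a b : nat -> V,
    A `<=` [set x | exists k, box (a k) (b k) x] /\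
    forall N, \sum_(k < N) box_vol (a k) (b k) < e.

Definition C1_on (U : set V) (F : V -> V) : Prop :=
  (forall x, U x -> differentiable F x) /\
  {within U, continuous (fun x => 'J F x)}.

(* closed half-space {y | y_0 >= 0} (all of R^0 when n = 0) *)
Definition halfspace : set V :=
  [set y | forall i : 'I_n, val i = 0%N -> 0 <= y ord0 i].

(* X is an n-dimensional C^1 submanifold (with boundary) of R^n:
   C^1 charts onto open subsets of the half-space *)
Definition C1_manifold_dim_n (X : set V) : Prop :=
  forall x, X x -> exists (U W : set V) (phi psi : V -> V),
    [/\ open U, open W, U x, phi @` U = W &
    [/\ C1_on U phi, C1_on W psi,
        (forall y, U y -> psi (phi y) = y),
        (forall z, W z -> phi (psi z) = z) &
        phi @` (U `&` X) = W `&` halfspace]].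

Definition local_diffeo_at (X : set V) (f : V -> V) (x : V) : Prop :=
  exists (U W : set V) (g : V -> V),
    [/\ open U, open W, U x, U `<=` X & 
    [/\ f @` U = W, C1_on U f, C1_on W g,
        (forall y, U y -> g (f y) = y) &
        (forall z, W z -> f (g z) = z)]].

Definition hyperbolic_stable_fixed_point (f : V -> V) (x : V) : Prop :=
  f x = x /\
  forall z : R[i], eigenvalue (map_mx (real_complex R) ('J f x)) z -> `|z| < 1.

Definition basin (X : set V) (f : V -> V) (x : V) : set V :=
  [set y | X y /\ (fun k : nat => iter k f y) @ \oo --> x].

Variable M : nat.

(* Phi f v k m = f_{v[k-1]} o ... o f_{v[k-m]} *)
Fixpoint Phi (f : 'I_M -> V -> V) (v : int -> 'I_M) (k : int) (m : nat)
  : V -> V :=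
  match m with
  | 0%N => id
  | m'.+1 => fun y => Phi f v k m' (f (v (k - (m'.+1)%:Z)) y)
  end.

Definition entire_solution (X : set V) (f : 'I_M -> V -> V) (v : int -> 'I_M)
  (xi : int -> V) : Prop :=
  forall k, X (xi k) /\ xi (k + 1) = f (v k) (xi k).

Definition pullback_attracting (X : set V) (f : 'I_M -> V -> V)
  (v : int -> 'I_M) (xi : int -> V) : Prop :=
  exists2 eps : R, 0 < eps & forall k : int, forall d : R, 0 < d ->
    exists N : nat, forall m : nat, (N <= m)%N -> forall y, X y ->
      `|y - xi (k - m%:Z)| < eps -> `|Phi f v k m y - xi k| < d.

Definition uniformly_attracting (X : set V) (f : 'I_M -> V -> V)
  (v : int -> 'I_M) (x : int -> V) : Prop :=
  exists2 dl : R, 0 < dl & forall d : R, 0 < d ->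
    exists N : nat, forall m : nat, (N <= m)%N -> forall (k : int) y, X y ->
      `|y - x (k - m%:Z)| < dl -> `|Phi f v k m y - x k| < d.

Definition UA_set (X : set V) (f : 'I_M -> V -> V) (v : int -> 'I_M)
  (x : int -> V) : set V :=
  [set y | X y /\ forall d : R, 0 < d -> exists N : nat,
     forall m : nat, (N <= m)%N -> forall k : int,
       `|Phi f v k m y - x k| < d].

Definition echo_index_ge (X : set V) (f : 'I_M -> V -> V) (v : int -> 'I_M)
  (E : nat) : Prop :=
  forall (m : nat) (xs : 'I_m -> int -> V),
    (forall p, entire_solution X f v (xs p) /\ uniformly_attracting X f v (xs p)) ->
    lnull (X `\` [set y | exists p, UA_set X f v (xs p) y]) ->
    (E <= m)%N.

Definition min_repetition (v : int -> 'I_M) (i : 'I_M) (m : nat) : Prop :=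
  forall a b : int, a <= b ->
    (forall k, a <= k <= b -> v k = i) -> v (a - 1) != i -> v (b + 1) != i ->
    (m%:Z <= b - a + 1).

Variable L : 'I_M -> nat.
Definition attractor_sequence
  (P : forall i : 'I_M, 'I_(L i) -> forall k : 'I_M, 'I_(L k))
  (v : int -> 'I_M) (A : forall k : int, 'I_(L (v k))) : Prop :=
  forall k : int, A k = P (v (k - 1)) (A (k - 1)) (v k).

End Defs.
Arguments attractor_sequence [M L] P v A.

(* Main.v *)
Require Import Defs.
From HB Require Import structures.
From mathcomp Require Import all_boot all_order all_algebra.
From mathcomp Require Import all_classical all_reals all_analysis.
From mathcomp Require Import complex.
From mathcomp Require Import measurable_realfun.
From mathcomp Require Import lra zify.
Set Implicit Arguments.
Unset Strict Implicit.
Unset Printing Implicit Defensive.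
Import Order.TTheory GRing.Theory Num.Theory.
Import numFieldNormedType.Exports.
Local Open Scope classical_set_scope.
Local Open Scope ring_scope.

Section L1.
Variable R : realType.

Definition boxN (n : nat) (a b : nat -> R) : set (nat -> R) :=
  [set x | forall i, (i < n)%N -> a i <= x i <= b i].
Definition volN (n : nat) (a b : nat -> R) : R :=
  \prod_(i < n) Num.max 0 (b i - a i).

Lemma volN_ge0 n a b : 0 <= volN n a b.
Proof. by apply: prodr_ge0 => i _; rewrite le_max lexx. Qed.

Local Notation lam := (@lebesgue_measure R).

Lemma lam_itv (c d : R) : lam `[c, d] = (Num.max 0 (d - c))%:E.
Proof.
rewrite lebesgue_measure_itv /=.
rewrite lte_fin; have [cd|dc] := ltP c d.
  rewrite -EFinD; congr (_%:E).
  by apply/esym/max_idPr; rewrite subr_ge0 ltW.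
congr (_%:E).
by apply/esym/max_idPl; rewrite subr_le0.
Qed.

Local Open Scope ereal_scope.
Lemma coverN n : forall (a b : nat -> R) (c d : nat -> nat -> R) (w : pred nat),
  (forall x, boxN n a b x -> exists k, w k /\ boxN n (c k) (d k) x) ->
  (volN n a b)%:E <= \sum_(k <oo) ((w k)%:R * volN n (c k) (d k))%:E.
Proof.
elim: n => [|n IH] a b c d w H.
  have [k [wk _]] := H (fun _ => 0%R) (fun i (hi : (i < 0)%N) => False_ind _ (notF hi)).
  rewrite /volN big_ord0.
  apply: le_trans (nneseries_lim_ge k.+1 _).
    rewrite big_nat_recr//= wk big_ord0 mulr1 leeDr// sume_ge0// => i _.
    by rewrite lee_fin mulr_ge0 ?volN_ge0.
  by move=> i _ _; rewrite lee_fin mulr_ge0 ?volN_ge0.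
have wv0 k : 0 <= ((w k)%:R * volN n.+1 (c k) (d k))%:E.
  by rewrite lee_fin mulr_ge0 ?volN_ge0.
rewrite /volN big_ord_recr /= -/(volN n a b).
have [ba|ab] := ltP (b n) (a n).
  rewrite (_ : Num.max _ _ = 0%R); last by apply/max_idPl; rewrite subr_le0 ltW.
  by rewrite mulr0 nneseries_ge0.
pose D := `[a n, b n]%classic.
pose G k t := ((w k)%:R * volN n (c k) (d k) * \1_(`[c k n, d k n]%classic) t)%:E.
have G0 k t : 0 <= G k t.
  by rewrite lee_fin !mulr_ge0 ?volN_ge0.
have slice t : D t -> (volN n a b)%:E <= \sum_(k <oo) G k t.
  move=> Dt.
  pose w' := fun k => w k && (c k n <= t <= d k n)%R.
  have := IH a b c d w'.
  rewrite (@eq_eseriesr _ _ (fun k => G k t)); last first.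
    move=> k _; rewrite /G /w' indicE.
    have -> : (t \in `[c k n, d k n]%classic) = (c k n <= t <= d k n)%R.
      apply/idP/idP => [/set_mem|h]; first by rewrite /= in_itv.
      by apply: mem_set; rewrite /= in_itv.
    by case: (w k); case: (c k n <= t <= d k n)%R; rewrite /= ?mulr1 ?mul1r ?mulr0 ?mul0r.
  apply => x Bx.
  pose x' := fun i => if i == n then t else x i.
  have Bx' : boxN n.+1 a b x'.
    move=> i; rewrite ltnS leq_eqVlt => /orP[/eqP ->|lt_in].
      by rewrite /x' eqxx; move: Dt; rewrite /D /= in_itv.
    by rewrite /x' (ltn_eqF lt_in); apply: Bx.
  have [k [wk Bk]] := H x' Bx'.
  exists k; split.
    have := Bk n (ltnSn n); rewrite /x' eqxx => ctd. by rewrite /w' wk ctd.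
  move=> i lt_in; have := Bk i (ltnW (leq_trans lt_in (ltnSn _))).
  by rewrite /x' (ltn_eqF lt_in).
have mD : measurable D by exact: measurable_itv.
have mG k : measurable_fun D (G k).
  apply/measurable_EFinP; apply: measurable_funM => //.
rewrite EFinM -lam_itv -/D.
have I0 : \int[lam]_(t in D) (volN n a b)%:E = (volN n a b)%:E * lam D.
  by rewrite integral_cst.
apply: (@le_trans _ _ (\int[lam]_(t in D) \sum_(k <oo) G k t)).
  rewrite -I0; apply: ge0_le_integral => //.
  + by move=> t _; rewrite lee_fin volN_ge0.
  have := @ge0_emeasurable_sum _ _ R D G predT (fun k t _ _ => G0 k t) (fun k _ => mG k).
  apply: eq_measurable_fun => t _; apply: eq_eseriesl => k; by rewrite inE.
rewrite integral_nneseries //.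
apply: lee_nneseries => [k _ _|k _]; first by apply: integral_ge0 => t _.
have r0 : (0 <= (w k)%:R * volN n (c k) (d k))%R by rewrite mulr_ge0 ?volN_ge0.
rewrite /G (@integralZl_indic _ _ _ lam D mD (fun _ => `[c k n, d k n]%classic)) //; last first.
  by move=> h; exfalso; move: h; rewrite ltNge r0.
rewrite integral_indic // big_ord_recr /= -/(volN n (c k) (d k)) mulrA EFinM.
rewrite -EFinM (EFinM _ (Num.max _ _)). apply: lee_wpmul2l; first by rewrite lee_fin.
by rewrite -lam_itv; apply: measureIl.
Qed.

Local Close Scope ereal_scope.

Definition oV n (a : 'rV[R]_n) : nat -> R :=
  fun i => if insub i is Some j then a ord0 j else 0.

Lemma oVE n (a : 'rV[R]_n) (j : 'I_n) : oV a j = a ord0 j.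
Proof. by rewrite /oV valK. Qed.

Lemma box_not_null n (a b : 'rV[R]_n) (S : set 'rV[R]_n) :
  (forall i, a ord0 i < b ord0 i) -> box a b `<=` S -> lnull S -> False.
Proof.
move=> ab bS /(_ (box_vol a b / 2)).
have v0 : 0 < box_vol a b.
  apply: prodr_gt0 => i _; rewrite lt_max; apply/orP; right.
  by rewrite subr_gt0.
case; first by rewrite divr_gt0.
move=> c [d [cov sm]].
have := @coverN n (oV a) (oV b) (fun k => oV (c k)) (fun k => oV (d k)) predT.
have -> : volN n (oV a) (oV b) = box_vol a b.
  by apply: eq_bigr => i _; rewrite !oVE.
have H1 : forall x, boxN n (oV a) (oV b) x ->
    exists k, predT k /\ boxN n (oV (c k)) (oV (d k)) x.
  move=> x Bx; pose y := \row_(j < n) x j.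
  have : S y.
    apply: bS => j; rewrite mxE -!oVE; exact: Bx.
  case/cov => k Bk; exists k; split => // i lt_in.
  by move: (Bk (Ordinal lt_in)); rewrite mxE -!(oVE _ (Ordinal lt_in)).
move=> /(_ H1) H; have : ((box_vol a b)%:E <= (box_vol a b / 2)%:E)%E.
  apply: (le_trans H); apply: lime_le.
    by apply: is_cvg_nneseries => k _ _; rewrite lee_fin mul1r volN_ge0.
  near=> N; rewrite sumEFin lee_fin big_mkord.
  apply: ltW; apply: le_lt_trans (sm N); apply: ler_sum => k _.
  by rewrite mul1r le_eqVlt; apply/orP; left; apply/eqP; apply: eq_bigr => i _; rewrite !oVE.
rewrite lee_fin => h; move: v0; rewrite ltNge; apply/negP/negPn; lra.
Unshelve. all: by end_near. Qed.
End L1.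

Section L2.
Variable R : realType.
Variable n : nat.
Local Notation V := 'rV[R]_n.

Lemma entry_le_norm (A : V) i : `|A ord0 i| <= `|A|.
Proof.
rewrite [X in _ <= X]/Num.norm /= mx_normrE.
by apply: (le_trans _ (le_bigmax _ _ (ord0, i))).
Qed.

Lemma norm_le_entries (A : V) c : 0 <= c -> (forall i, `|A ord0 i| <= c) -> `|A| <= c.
Proof.
move=> c0 H; rewrite [X in X <= _]/Num.norm /= mx_normrE.
apply/bigmax_leP; split => // [[i j]] _ /=.
by rewrite (ord1 i).
Qed.

Lemma cont_epsdelta (W : normedModType R) (f : V -> W) x :
  {for x, continuous f} -> forall e, 0 < e ->
  exists2 d, 0 < d & forall y, `|x - y| < d -> `|f x - f y| < e.
Proof.
move=> cf e e0; move/cvgrPdist_lt: cf => /(_ e e0).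
case/nbhs_normP => d /= d0 Hd; exists d => // y xy.
Qed.

Lemma open_epsdelta (U : set V) x : open U -> U x ->
  exists2 d, 0 < d & forall y, `|x - y| < d -> U y.
Proof.
move=> oU Ux; have : nbhs x U by apply: open_nbhs_nbhs.
case/nbhs_normP => d /= d0 Hd; exists d => // y xy.
Qed.

Lemma chart_open (X : set V) : C1_manifold_dim_n X -> forall z, X z -> forall r, 0 < r ->
  exists u, exists2 rho, 0 < rho & forall u', `|u - u'| < rho -> X u' /\ `|z - u'| < r.
Proof.
move=> HX z Xz r r0.
case: (HX z Xz) => U [W [phi [psi [oU oW Uz phiUW [C1phi C1psi psiphi phipsi phiX]]]]].
pose w := phi z.
have Ww : W w by rewrite -phiUW; exists z.
have psiw : psi w = z by rewrite /w psiphi.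
have Hw : @halfspace R n w.
  have : (W `&` @halfspace R n) w by rewrite -phiX; exists z.
  by case.
have [d1 d10 Hd1] := cont_epsdelta (differentiable_continuous (C1psi.1 w Ww)) r0.
have [d2 d20 Hd2] := open_epsdelta oW Ww.
pose d := Num.min d1 d2.
have d0 : 0 < d by rewrite lt_min d10 d20.
have dd1 : d <= d1 by rewrite ge_min lexx.
have dd2 : d <= d2 by rewrite ge_min lexx orbT.
pose w1 : V := \row_j (if val j == 0%N then w ord0 j + d / 2 else w ord0 j).
have ww1 : `|w - w1| <= d / 2.
  apply: norm_le_entries; first by rewrite divr_ge0 // ltW.
  move=> i; rewrite !mxE; case: ifP => _.
    by rewrite opprD addrA subrr add0r normrN ger0_norm // divr_ge0 // ltW.
  by rewrite subrr normr0 divr_ge0 // ltW.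
have K : forall w2, `|w1 - w2| < d / 4 -> [/\ W w2, @halfspace R n w2 & `|z - psi w2| < r].
  move=> w2 w12.
  have ww2 : `|w - w2| < d.
    rewrite (_ : w - w2 = (w - w1) + (w1 - w2)); last by rewrite addrA subrK.
    apply: le_lt_trans (ler_normD _ _) _. lra.
  split.
  - by apply: Hd2; apply: lt_le_trans dd2.
  - move=> i i0; have := Hw i i0.
    have := le_lt_trans (entry_le_norm (w1 - w2) i) w12.
    rewrite !mxE i0 eqxx => h1 h2.
    have := ler_norm (w ord0 i + d / 2 - w2 ord0 i). lra.
  - by rewrite -psiw; apply: Hd1; apply: lt_le_trans dd1.
have [u [Uu Xu] phiu] : (phi @` (U `&` X)) w1.
  rewrite phiX; have [] := K w1; first by rewrite subrr normr0 divr_gt0.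
  by move=> ? ? _; split.
have [d3 d30 Hd3] := cont_epsdelta (differentiable_continuous (C1phi.1 u Uu)) (divr_gt0 d0 (ltr0Sn _ 3)).
have [d4 d40 Hd4] := open_epsdelta oU Uu.
exists u; exists (Num.min d3 d4); first by rewrite lt_min d30 d40.
move=> u' uu'.
have Uu' : U u' by apply: Hd4; apply: lt_le_trans uu' _; rewrite ge_min lexx orbT.
have h3 : `|w1 - phi u'| < d / 4.
  by rewrite -phiu; apply: Hd3; apply: lt_le_trans uu' _; rewrite ge_min lexx.
have [W2 H2 zr] := K (phi u') h3.
rewrite psiphi // in zr; split => //.
have [u'' [Uu'' Xu''] e] : (phi @` (U `&` X)) (phi u') by rewrite phiX.
by rewrite -(psiphi u' Uu') -e psiphi.
Qed.

Lemma cluster_back (X : set V) (xi : int -> V) : compact X -> (forall k, X (xi k)) ->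
  exists z, X z /\ forall N r, 0 < r -> exists m', (N <= m')%N /\ `|z - xi (- m'%:Z)| < r.
Proof.
move=> cX Xxi.
have := cX ((fun m : nat => xi (- m%:Z)) @ \oo) _ _.
case.
- by exists 0%N => // m _; apply: Xxi.
move=> z [Xz cz]; exists z; split => // N r r0.
have := cz [set t | exists m', (N <= m')%N /\ xi (- m'%:Z) = t] (ball z r).
case.
- by exists N => // m Nm; exists m.
- exact: nbhsx_ballx.
move=> t [[m' [Nm <-]] bt]; exists m'; split => //.
by move: bt; rewrite -ball_normE.
Qed.

Lemma eq_from_small (a b : V) : (forall d, 0 < d -> `|a - b| < d + d) -> a = b.
Proof.
move=> H; apply/eqP; rewrite -subr_eq0 -normr_eq0; apply/negPn/negP => ne.
have gt : 0 < `|a - b| by rewrite lt_def ne normr_ge0.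
have := H (`|a - b| / 4) (divr_gt0 gt (ltr0Sn _ 3)); lra.
Qed.

Lemma match_sol (M : nat) (X : set V) (f : 'I_M -> V -> V) (v : int -> 'I_M)
  (xi : int -> V) (m : nat) (xs : 'I_m -> int -> V) :
  compact X -> C1_manifold_dim_n X ->
  entire_solution X f v xi -> pullback_attracting X f v xi ->
  lnull (X `\` [set y | exists p, UA_set X f v (xs p) y]) ->
  exists q, xi = xs q.
Proof.
move=> cX HX exi [eps eps0 Hpb] Hnull.
have [z [Xz Hz]] := cluster_back cX (fun k => (exi k).1).
have eps20 : 0 < eps / 2 by rewrite divr_gt0.
have [u [rho rho0 Hu]] := chart_open HX Xz eps20.
pose a : V := \row_i (u ord0 i - rho / 2).
pose b : V := \row_i (u ord0 i + rho / 2).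
have ab : forall i, a ord0 i < b ord0 i.
  move=> i; rewrite !mxE.
  have : 0 < rho / 2 by rewrite divr_gt0.
  lra.
have boxu : forall y, box a b y -> `|u - y| < rho.
  move=> y By; apply: le_lt_trans (_ : rho / 2 < rho); last first.
    lra.
  apply: norm_le_entries; first by rewrite divr_ge0 // ltW.
  move=> i; have := By i; rewrite !mxE => /andP[h1 h2].
  rewrite ler_norml; apply/andP; split; lra.
have [y [By [q UAy]]] : exists y, box a b y /\ exists q, UA_set X f v (xs q) y.
  apply: contrapT => nex.
  apply: (box_not_null ab _ Hnull) => y By; split.
    exact: (Hu y (boxu y By)).1.
  by move=> Hy; apply: nex; exists y; split.
have Hyz : `|z - y| < eps / 2 by exact: (Hu y (boxu y By)).2.
case: UAy => Xy Hy.
exists q; apply/funext => K; apply: eq_from_small => d d0.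
have [N1 H1] := Hpb K d d0.
have [N2 H2] := Hy d d0.
have [m' [Nm Hm']] := Hz (N1 + N2 + absz K)%N (eps / 2) eps20.
pose mm := absz (K + m'%:Z).
have emm : mm%:Z = K + m'%:Z.
  rewrite /mm gez0_abs //; lia.
have e2 : K - mm%:Z = - m'%:Z by rewrite emm; lia.
have hN1 : (N1 <= mm)%N by move: emm Nm; clearbody mm; lia.
have hN2 : (N2 <= mm)%N by move: emm Nm; clearbody mm; lia.
have hy : `|y - xi (K - mm%:Z)| < eps.
  rewrite e2 (_ : y - _ = (y - z) + (z - xi (- m'%:Z))); last by rewrite addrA subrK.
  apply: le_lt_trans (ler_normD _ _) _; rewrite distrC; lra.
have := H1 mm hN1 y Xy hy.
have := H2 mm hN2 K.
move=> h2 h1.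
rewrite (_ : xi K - xs q K = - (Phi f v K mm y - xi K) + (Phi f v K mm y - xs q K)); last first.
  by rewrite opprB addrA subrK.
apply: le_lt_trans (ler_normD _ _) _; rewrite normrN; lra.
Qed.
End L2.

Unset Implicit Arguments.
Theorem theorem1 (R : realType) (n : nat) (X : set 'rV[R]_n)
  (M : nat) (f : 'I_M -> 'rV[R]_n -> 'rV[R]_n) (U : 'I_M -> set 'rV[R]_n)
  (L : 'I_M -> nat) (x : forall i : 'I_M, 'I_(L i) -> 'rV[R]_n)
  (P : forall i : 'I_M, 'I_(L i) -> forall k : 'I_M, 'I_(L k))
  (v : int -> 'I_M) (mmin : nat) (mminus : 'I_M -> nat) (E : nat) :
  (* X is a compact n-dimensional manifold in R^n *)
  compact X -> C1_manifold_dim_n X ->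
  (* f_i : X -> X *)
  (forall i y, X y -> X (f i y)) ->
  (* (i) C^1 (on an open neighbourhood U i of X) and a.e. a local diffeomorphism *)
  (forall i, open (U i) /\ X `<=` U i /\ C1_on (U i) (f i)) ->
  (forall i, lnull (X `\` [set y | local_diffeo_at X (f i) y])) ->
  (* (ii) the hyperbolic stable fixed points of f_i are exactly the
     (distinct) points x i 0, ..., x i (L i - 1) *)
  (forall i j, X (x i j) /\ hyperbolic_stable_fixed_point (f i) (x i j)) ->
  (forall i, injective (x i)) ->
  (forall i y, X y -> hyperbolic_stable_fixed_point (f i) y ->
     exists j, y = x i j) ->
  (* (iii) the basins cover X up to a null set *)
  (forall i, lnull (X `\` [set y | exists j, basin X (f i) (x i j) y])) ->
  (* (iv) *)
  (forall i j k, basin X (f k) (x k (P i j k)) (x i j)) ->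
  (* minimum repetitions m_i^- >= m_min *)
  (forall i, (mmin <= mminus i)%N /\ min_repetition v i (mminus i)) ->
  (* pullback attracting entire solutions for each entire attractor sequence *)
  (forall A : forall k : int, 'I_(L (v k)), attractor_sequence P v A ->
     exists xi : int -> 'rV[R]_n,
       [/\ entire_solution X f v xi, pullback_attracting X f v xi &
           forall k : int, basin X (f (v (k + 1))) (x (v (k + 1)) (A (k + 1))) (xi k)]) ->
  (* there are exactly E distinct entire attractor sequences *)
  (exists As : 'I_E -> (forall k : int, 'I_(L (v k))),
     [/\ (forall p, attractor_sequence P v (As p)), injective As &
         forall A, attractor_sequence P v A -> exists p, A = As p]) ->
  echo_index_ge X f v E.
Proof.
move=> cX HX fX _ _ Hfix Hinj _ _ _ _ Hxi [As [HAs injAs _]] m xs Hxs Hnull.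
have [xi Hxi'] := choice (fun p => Hxi (As p) (HAs p)).
have [g Hg] : {g : 'I_E -> 'I_m & forall p, xi p = xs (g p)}.
  apply: (@choice _ _ (fun p q => xi p = xs q)) => p; case: (Hxi' p) => e pb _.
  exact: match_sol cX HX e pb Hnull.
have injg : injective g.
  move=> p p' e; apply: injAs; apply: functional_extensionality_dep => k.
  have exi : xi p = xi p' by rewrite !Hg e.
  case: (Hxi' p) => _ _ B; case: (Hxi' p') => _ _ B'.
  have := B (k - 1); have := B' (k - 1); rewrite exi.
  rewrite subrK => -[_ c1] [_ c2].
  apply: (Hinj (v k)).
  exact: (cvg_unique (@norm_hausdorff _ _) c2 c1).
by have := leq_card g injg; rewrite !card_ord.
Qed.
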